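(* Let $X$ be a finite poset with a unique maximal node. Suppose $Y$ is a height zero gluing of $X$ along $C\subseteq \min X$ with gluing map $g:X\to Y$. Let $x_0$ be a minimal node of $X$. Then $$\dim\big(g(x_0)^{\uparrow}_Y\big)=\max\{\dim(x^{\uparrow}_X)\mid x\in X,\ g(x)=g(x_0)\}.$$
   Context: All posets are nonempty. For $x,y$ in a poset $X$, $y$ covers $x$ (written $x<_c y$) if $x<y$ and there is no $z\in X$ with $x<z<y$. The length of a finite chain $C$ is $|C|-1$; $\dim(X)$ is the supremum of the lengths of finite chains in $X$; $\min X$ is the set of minimal elements of $X$. For $x\in X$ the up set is $x^{\uparrow}_X=\{y\in X: x\le y\}$ with the induced order. A poset map is an order-preserving map. A subset $C\subseteq X$ is complete if whenever $u,v\in C$ and $u\le y\le v$ with $y\in X$, then $y\in C$ (every subset of $\min X$ is complete). Given a surjective poset map $g:X\to Y$, a poset map $h:X\to Z$ is compatible with $g$ if $h$ is constant on $g^{-1}(y)$ for every $y\in Y$. A poset $Y$ is a gluing of $X$ with gluing map $g$ (a surjective poset map $X\to Y$) if for every poset map $h:X\to Z$ compatible with $g$ there is a unique poset map $\varphi:Y\to Z$ with $\varphi\circ g=h$. It is a gluing of $X$ along a complete subset $C$ if moreover $g$ is constant on $C$, and whenever $g(x)=g(x')$ for distinct $x,x'\in X$, both $x,x'\in C$. A height zero gluing is a gluing along some $C\subseteq\min X$. *)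

(* Defs.v *)
From mathcomp Require Import all_boot all_order.
Set Implicit Arguments. Unset Strict Implicit. Unset Printing Implicit Defensive.
Import Order.Theory.
Local Open Scope order_scope.

Section PosetDefs.
Context {d : Order.disp_t} {T : porderType d}.

Definition minimal (x : T) : Prop := forall y : T, ~ (y < x).
Definition maximal (x : T) : Prop := forall y : T, ~ (x < y).

(* finite chain contained in the subset S (with induced order):
   a duplicate-free list of pairwise comparable elements of S;
   its length is |C| - 1 = size s - 1. *)
Definition chain_in (S : T -> Prop) (s : seq T) : Prop :=
  [/\ uniq s, (forall x, x \in s -> S x) &
      (forall x y, x \in s -> y \in s -> (x <= y) || (y <= x))].

(* dim(S) = n : n is the supremum of the lengths of finite chains in S
   (S nonempty; a supremum in nat equal to n means attained and bounding). *)
Definition dim_eq (S : T -> Prop) (n : nat) : Prop :=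
  (exists s, chain_in S s /\ size s = n.+1) /\
  (forall s, chain_in S s -> (size s <= n.+1)%N).

Definition upset (x : T) : T -> Prop := fun y => x <= y.

Definition complete (C : T -> Prop) : Prop :=
  forall u v y : T, C u -> C v -> u <= y -> y <= v -> C y.

End PosetDefs.

Definition is_gluing {dX dY : Order.disp_t} {X : porderType dX} {Y : porderType dY}
  (g : X -> Y) : Prop :=
  [/\ {homo g : x y / x <= y},
      (forall y : Y, exists x : X, g x = y) &
      forall (dZ : Order.disp_t) (Z : porderType dZ) (h : X -> Z),
        {homo h : x y / x <= y} ->
        (forall x x' : X, g x = g x' -> h x = h x') ->
        exists! phi : Y -> Z, {homo phi : x y / x <= y} /\ (forall x, phi (g x) = h x)].

Definition gluing_along {dX dY : Order.disp_t} {X : porderType dX} {Y : porderType dY}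
  (g : X -> Y) (C : X -> Prop) : Prop :=
  [/\ is_gluing g, complete C,
      (forall c c', C c -> C c' -> g c = g c') &
      (forall x x', x <> x' -> g x = g x' -> C x /\ C x')].

Definition height_zero_gluing_along {dX dY : Order.disp_t} {X : porderType dX}
  {Y : porderType dY} (g : X -> Y) (C : X -> Prop) : Prop :=
  (forall c, C c -> minimal c) /\ gluing_along g C.

(* Main.v *)
Require Import Defs.
From mathcomp Require Import all_boot all_order.
Import Order.Theory.
Local Open Scope order_scope.
Import Order.DefaultSetSubsetOrder.
From Stdlib Require Import Classical Lia.
From mathcomp Require Import zify.

Lemma prop_max (P : nat -> Prop) (B : nat) :
  (exists k, P k) -> (forall k, P k -> (k <= B)%N) ->
  exists n, P n /\ forall k, P k -> (k <= n)%N.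
Proof.
move=> [k0 Pk0] bd.
have main : forall d n0, P n0 -> (B - n0 <= d)%N -> exists n, P n /\ forall k, P k -> (k <= n)%N.
  elim=> [|d IH] n0 Pn0 hd.
    exists n0; split => // k Pk; have := bd _ Pk; move: hd; rewrite leqn0 subn_eq0.
    by move=> h1 h2; apply: leq_trans h2 h1.
  case: (classic (exists k, P k /\ (n0 < k)%N)) => [[k [Pk lt]]|nex].
    apply: (IH k Pk); have := bd _ Pk => kB.
    lia.
  exists n0; split => // k Pk; rewrite leqNgt; apply/negP => lt; apply: nex; by exists k.
exact: (main B k0 Pk0 (leq_subr _ _)).
Qed.

Section Aux.
Variables (dX dY : Order.disp_t) (X : finPOrderType dX) (Y : porderType dY).
Variables (g : X -> Y) (C : X -> Prop).
Hypothesis Cmin : forall c, C c -> minimal c.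
Hypothesis Cinj : forall x x', x <> x' -> g x = g x' -> C x /\ C x'.

Lemma min_le (a b : X) : minimal b -> a <= b -> a = b.
Proof.
move=> mb; rewrite le_eqVlt => /orP[/eqP //|ab]; by case: (mb a).
Qed.

Definition R (u v : Y) : bool :=
  [exists a, exists b, (g a == u) && (g b == v) && (a <= b)].

Lemma RP u v : reflect (exists a b, [/\ g a = u, g b = v & a <= b]) (R u v).
Proof.
apply: (iffP existsP) => [[a /existsP[b /andP[/andP[/eqP h1 /eqP h2] h3]]]|[a [b [h1 h2 h3]]]].
  by exists a, b.
by exists a; apply/existsP; exists b; rewrite h1 h2 !eqxx.
Qed.

Lemma R_trans u v w : R u v -> R v w -> R u w.
Proof.
move=> /RP[a [b [<- gbv ab]]] /RP[b' [c [gb'v <- b'c]]].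
apply/RP; case: (eqVneq b b') => [eb|nb].
  by exists a, c; split => //; rewrite (le_trans ab) // eb.
have [Cb _] := Cinj _ _ (elimN eqP nb) (etrans gbv (esym gb'v)).
have eab := min_le _ _ (Cmin _ Cb) ab.
by exists b', c; split => //; rewrite gb'v -gbv eab.
Qed.

Hypothesis glu : is_gluing g.

Lemma ordY (a b : X) : g a <= g b -> exists a' b', [/\ g a' = g a, g b' = g b & a' <= b'].
Proof.
case: glu => gmono gsurj gup.
pose h (x : X) : {set X} := [set z | R (g z) (g x)].
have hmono : {homo h : x y / x <= y}.
  move=> x y xy; apply/subsetP => z; rewrite !inE => Rz.
  apply: R_trans Rz _; apply/RP; by exists x, y.
have hcomp : forall x x', g x = g x' -> h x = h x'.
  by move=> x x' e; rewrite /h e.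
have [phi [[phimono phig] _]] := gup _ _ h hmono hcomp.
move=> gab; have := phimono _ _ gab; rewrite !phig => /subsetP /(_ a).
rewrite !inE => H.
have : R (g a) (g b) by apply: H; apply/RP; exists a, a.
by move/RP.
Qed.
End Aux.
Arguments min_le {dX X a b}.
Arguments ordY {dX dY X Y g C} Cmin Cinj glu {a b}.

Lemma chain_min (dX : Order.disp_t) (X : porderType dX) (l : seq X) :
  l != [::] -> (forall x y, x \in l -> y \in l -> (x <= y) || (y <= x)) ->
  exists2 m, m \in l & forall b, b \in l -> m <= b.
Proof.
elim: l => [//|b l IH] _ cmp.
case: (eqVneq l [::]) => [->|ln].
  by exists b; rewrite ?mem_head // => z; rewrite inE => /eqP ->.
have [m ml mle] : exists2 m, m \in l & forall b, b \in l -> m <= b.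
  apply: IH => // x y xl yl; apply: cmp; rewrite inE ?xl ?yl orbT //.
have mbl : m \in b :: l by rewrite inE ml orbT.
have /orP[bm|mb] := cmp b m (mem_head _ _) mbl.
  exists b; first exact: mem_head.
  move=> z; rewrite inE => /orP[/eqP ->//|zl]; exact: le_trans bm (mle _ zl).
exists m; first by rewrite inE ml orbT.
move=> z; rewrite inE => /orP[/eqP ->//|zl]; exact: mle.
Qed.

Theorem mainTheorem1 (dX dY : Order.disp_t) (X : finPOrderType dX) (Y : porderType dY)
  (g : X -> Y) (C : X -> Prop) (x0 : X) :
  (exists m : X, maximal m /\ forall m' : X, maximal m' -> m' = m) ->
  height_zero_gluing_along g C ->
  minimal x0 ->
  exists n : nat,
    dim_eq (upset (g x0)) n /\
    (exists x : X, g x = g x0 /\ dim_eq (upset x) n) /\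
    (forall (x : X) (m : nat), g x = g x0 -> dim_eq (upset x) m -> (m <= n)%N).
Proof.
move=> _ [Cmin [glu _ _ Cinj]] _.
have gmono : {homo g : x y / x <= y} by case: glu.
have gsurj : forall y : Y, exists x : X, g x = y by case: glu.
have down : forall x t, chain_in (upset x) t -> chain_in (upset (g x)) (map g t).
  move=> x t [ut tup tcmp]; split.
  - rewrite map_inj_in_uniq // => a b al bl gab; apply/eqP; apply/negPn/negP => nab.
    have [Ca Cb] := Cinj _ _ (elimN eqP nab) gab.
    move: (min_le (Cmin _ Ca) (tup _ al)) (min_le (Cmin _ Cb) (tup _ bl)) => ea eb.
    by rewrite -ea -eb eqxx in nab.
  - by move=> y /mapP[a al ->]; apply: gmono; apply: tup.
  - move=> y z /mapP[a al ->] /mapP[b bl ->].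
    have /orP[ab|ba] := tcmp _ _ al bl; first by rewrite gmono.
    by rewrite (gmono _ _ ba) orbT.
have up : forall s, chain_in (upset (g x0)) s ->
    exists x t, [/\ g x = g x0, chain_in (upset x) t & (size s <= size t)%N].
  move=> s [us sup scmp].
  have uniqpre : forall y b b', y \in s -> y != g x0 -> g b = y -> g b' = y -> b = b'.
    move=> y b b' ys ny gb gb'; apply/eqP; apply/negPn/negP => /eqP nb.
    have [Cb Cb'] := Cinj _ _ nb (etrans gb (esym gb')).
    have := sup _ ys; rewrite /upset -gb => /(ordY Cmin Cinj glu).
    move=> [a [b'' [ga gb'' ab'']]].
    case: (eqVneq b'' b) => [eb|nb''].
      move: ab''; rewrite eb => /(min_le (Cmin _ Cb)) eab.
      by move: ny; rewrite -gb -eab ga eqxx.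
    have [Cb'' _] := Cinj _ _ (elimN eqP nb'') gb''.
    have eab := min_le (Cmin _ Cb'') ab''.
    by move: ny; rewrite -gb -gb'' -eab ga eqxx.
  pose lift (y : Y) := odflt x0 [pick x | g x == y].
  have gliftE : forall y, g (lift y) = y.
    move=> y; rewrite /lift; case: pickP => [x /eqP //|].
    by have [x <-] := gsurj y => /(_ x); rewrite eqxx.
  pose s' := [seq y <- s | y != g x0].
  pose L := map lift s'.
  have Lchain : forall b b', b \in L -> b' \in L -> (b <= b') || (b' <= b).
    move=> b b' /mapP[y ys' ->] /mapP[y' ys'' ->].
    move: ys' ys''; rewrite !mem_filter => /andP[ny ys] /andP[ny' ys'].
    have cmp : forall u v, u \in s -> v \in s -> u != g x0 -> v != g x0 -> u <= v ->
        lift u <= lift v.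
      move=> u v us0 vs0 nu nv; rewrite -{1}(gliftE u) -{1}(gliftE v).
      move/(ordY Cmin Cinj glu) => [a [c [ga gc ac]]].
      rewrite !gliftE in ga gc.
      rewrite -(uniqpre u a (lift u)) ?gliftE //.
      by rewrite -(uniqpre v c (lift v)) ?gliftE.
    have /orP[yy|yy] := scmp _ _ ys ys'.
      by rewrite cmp.
    by rewrite (cmp y' y) ?orbT.
  have Labove : forall b, b \in L -> exists2 a, g a = g x0 & a <= b.
    move=> b /mapP[y]; rewrite mem_filter => /andP[ny ys] ->.
    have := sup _ ys; rewrite /upset -{1}(gliftE y) => /(ordY Cmin Cinj glu).
    move=> [a [c [ga gc ac]]]; exists a => //.
    rewrite gliftE in gc.
    by rewrite -(uniqpre y c (lift y)) ?gliftE.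
  have [a ga aL] : exists2 a, g a = g x0 & forall b, b \in L -> a <= b.
    case: (eqVneq L [::]) => [->|Ln]; first by exists x0.
    have [m mL mle] := chain_min _ _ _ Ln Lchain.
    have [a ga am] := Labove _ mL.
    by exists a => // b bL; apply: le_trans am (mle _ bL).
  exists a, (a :: L); split => //.
  - split.
    + rewrite /= map_inj_in_uniq ?filter_uniq ?andbT //.
        apply/negP => /mapP[y]; rewrite mem_filter => /andP[ny _] ey.
        by move: ny; rewrite -(gliftE y) -ey ga eqxx.
      move=> y y'; rewrite !mem_filter => /andP[_ _] /andP[_ _] e.
      by rewrite -(gliftE y) e gliftE.
    + by move=> z; rewrite inE => /orP[/eqP ->|/aL]; rewrite /upset.
    + have aLc : forall z, z \in a :: L -> a <= z.
        by move=> z; rewrite inE => /orP[/eqP ->|/aL].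
      move=> z w; rewrite !inE => /orP[/eqP ->|zL] /orP[/eqP ->|wL].
      * by rewrite lexx.
      * by rewrite aL.
      * by rewrite aL ?orbT.
      * exact: Lchain.
  - rewrite /= size_map size_filter.
    rewrite -(count_predC (fun y => y != g x0) s) -add1n addnC leq_add2r.
    rewrite (eq_count (a2 := pred1 (g x0))); last by move=> y /=; rewrite negbK.
    by rewrite (count_uniq_mem _ us) leq_b1.
have bnd : forall s, chain_in (upset (g x0)) s -> (size s <= #|X|)%N.
  move=> s [us _ _]; rewrite -(size_codom g).
  apply: uniq_leq_size => // y _; have [x <-] := gsurj y; exact: codom_f.
have ex : exists k, exists s, chain_in (upset (g x0)) s /\ size s = k.+1.
  exists 0%N, [:: g x0]; split => //; split => //.
  - by move=> x; rewrite inE => /eqP ->; rewrite /upset.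
  - by move=> x y; rewrite !inE => /eqP -> /eqP ->; rewrite lexx.
have ubd : forall k, (exists s, chain_in (upset (g x0)) s /\ size s = k.+1) -> (k <= #|X|)%N.
  by move=> k [s' [sc sz]]; apply: ltnW; rewrite -sz; apply: bnd.
have [n [[s [sch ssz]] nmax]] := prop_max _ _ ex ubd.
have nmax' : forall s, chain_in (upset (g x0)) s -> (size s <= n.+1)%N.
  move=> s' sc'; case sk: (size s') => [//|k].
  by rewrite ltnS; apply: nmax; exists s'.
exists n; split.
  split; last exact: nmax'.
  by exists s.
have [x [t [gx tch st]]] := up s sch.
have ht : size t = n.+1.
  apply/eqP; rewrite eqn_leq -{2}ssz st andbT.
  rewrite -(size_map g); apply: nmax'; rewrite -gx; exact: down.
split.
  exists x; split; first exact: gx.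
  split; first by exists t.
  move=> t' tc'; rewrite -(size_map g); apply: nmax'; rewrite -gx; exact: down.
move=> y m gy [[t' [tc' st']] _].
have := nmax' _ (eq_ind _ (fun z => chain_in (upset z) (map g t')) (down _ _ tc') _ gy).
by rewrite size_map st'.
Qed.
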